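(* Let $S$ be a finite poset such that $\Gamma(S)$ contains a cycle but $\Gamma(S')$ is acyclic for every proper subset $S'\subset S$ with the induced order. Then $S$ is isomorphic either to $V$ or to $W^{2k}$ for some $k\ge2$.
   Context: $\Gamma(S)$ is the Hasse graph of $S$ (vertices $S$, edge between $s,s'$ when one covers the other); a cycle is a sequence of $m\ge3$ distinct vertices with consecutive ones (and the last and first) adjacent. $V=\{h^-,h_1,h_2,h^+\}$ with $h^-<h_1<h^+$, $h^-<h_2<h^+$, $h_1,h_2$ incomparable. $W^{2k}=\{s_1^-,\dots,s_k^-,s_1^+,\dots,s_k^+\}$ with the order whose only strict relations are $s_i^-<s_i^+$ ($1\le i\le k$), $s_i^-<s_{i+1}^+$ ($1\le i\le k-1$) and $s_k^-<s_1^+$ (a crown). *)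

(* Defs.v *)
From mathcomp Require Import all_boot.
Set Implicit Arguments. Unset Strict Implicit. Unset Printing Implicit Defensive.

Section Hasse.
Variables (T : finType) (le : rel T).

Definition is_poset := [/\ reflexive le, antisymmetric le & transitive le].

Definition ltp (x y : T) : bool := le x y && (x != y).

Definition covers_in (A : {set T}) (x y : T) : bool :=
  [&& x \in A, y \in A, ltp x y & [forall z in A, ~~ (ltp x z && ltp z y)]].

Definition hasse_adj (A : {set T}) : rel T :=
  fun x y => covers_in A x y || covers_in A y x.

Definition hasse_has_cycle (A : {set T}) : Prop :=
  exists s : seq T,
    [/\ 3 <= size s, uniq s, all (fun x => x \in A) s & cycle (hasse_adj A) s].

End Hasse.

Definition order_iso (T U : finType) (le : rel T) (leU : rel U) : Prop :=
  exists f : T -> U, bijective f /\ forall x y, leU (f x) (f y) = le x y.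

(* V on 'I_4 : 0 = h^-, 1 = h_1, 2 = h_2, 3 = h^+ *)
Definition leV : rel 'I_4 :=
  fun i j => (i == j) || (val i == 0) || (val j == 3).

(* W^{2k} on 'I_k * bool : (i, false) = s_{i+1}^-, (i, true) = s_{i+1}^+
   (0-based indices). s_i^- < s_j^+ iff j = i or j = i+1 mod k. *)
Definition leW (k : nat) : rel ('I_k * bool) :=
  fun x y => (x == y) ||
    [&& ~~ x.2, y.2 & (val y.1 == val x.1) || (val y.1 == (val x.1).+1 %% k)].
Arguments leW k x y : clear implicits.

(* Main.v *)
Require Import Defs.
From mathcomp Require Import all_boot.
From mathcomp Require Import zify.
Set Implicit Arguments. Unset Strict Implicit. Unset Printing Implicit Defensive.

Section Basics.
Variables (T : finType) (le : rel T).
Hypothesis Hpo : is_poset le.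

Lemma po_refl : reflexive le. Proof. by case: Hpo. Qed.
Lemma po_anti : antisymmetric le. Proof. by case: Hpo. Qed.
Lemma po_trans : transitive le. Proof. by case: Hpo. Qed.

Lemma ltpW x y : ltp le x y -> le x y. Proof. by case/andP. Qed.
Lemma ltp_irr x : ltp le x x = false. Proof. by rewrite /ltp eqxx andbF. Qed.
Lemma ltp_nle x y : ltp le x y -> le y x = false.
Proof.
case/andP=> lxy nxy; apply/negP=> lyx; move: nxy.
by rewrite (po_anti (introT andP (conj lxy lyx))) eqxx.
Qed.
Lemma ltp_asym x y : ltp le x y -> ltp le y x = false.
Proof. by move=> h; rewrite /ltp (ltp_nle h). Qed.
Lemma ltp_trans x y z : ltp le x y -> ltp le y z -> ltp le x z.
Proof.
move=> hxy hyz; rewrite /ltp (po_trans (ltpW hxy) (ltpW hyz)) /=.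
apply/eqP=> exz; subst z. by move: hyz; rewrite /ltp (ltp_nle hxy).
Qed.
Lemma le_ltp x y : le x y -> x != y -> ltp le x y.
Proof. by rewrite /ltp => -> ->. Qed.

Lemma cov_lt A x y : covers_in le A x y -> ltp le x y.
Proof. by case/and4P. Qed.
Lemma cov_meml A x y : covers_in le A x y -> x \in A.
Proof. by case/and4P. Qed.
Lemma cov_memr A x y : covers_in le A x y -> y \in A.
Proof. by case/and4P. Qed.
Lemma cov_nobetween A x y z : covers_in le A x y -> z \in A -> ltp le x z -> ltp le z y -> False.
Proof.
case/and4P=> _ _ _ /forallP H zA xz zy.
by move: (H z); rewrite zA xz zy.
Qed.

Lemma cov_sub (A B : {set T}) x y : covers_in le A x y -> B \subset A -> x \in B -> y \in B ->
  covers_in le B x y.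
Proof.
case/and4P=> _ _ lxy /forallP H sBA xB yB; rewrite /covers_in xB yB lxy /=.
apply/forallP=> z; apply/implyP=> zB; exact: (implyP (H z) (subsetP sBA z zB)).
Qed.

Lemma adj_sym A x y : hasse_adj le A x y = hasse_adj le A y x.
Proof. by rewrite /hasse_adj orbC. Qed.

Lemma adj_sub (A B : {set T}) x y : hasse_adj le A x y -> B \subset A -> x \in B -> y \in B ->
  hasse_adj le B x y.
Proof.
rewrite /hasse_adj => /orP[h|h] sBA xB yB; apply/orP; [left|right];
  exact: cov_sub h sBA _ _.
Qed.

Lemma adj_irr A x : hasse_adj le A x x = false.
Proof. by apply/negP; rewrite /hasse_adj orbb => /cov_lt; rewrite ltp_irr. Qed.

Lemma cover_exists u v : ltp le u v -> exists w, covers_in le setT u w && le w v.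
Proof.
move=> huv.
pose P := fun w => ltp le u w && le w v.
have Pv : P v by rewrite /P huv po_refl.
case: (arg_minnP (fun w => #|[set z | le z w]|) Pv) => w /andP[uw wv] Hmin.
exists w; rewrite wv andbT /covers_in !inE uw /=.
apply/forallP=> z; apply/implyP=> _; apply/negP=> /andP[uz zw].
have Pz : P z by rewrite /P uz (po_trans (ltpW zw) wv).
move: (Hmin z Pz); apply/negP; rewrite -ltnNge.
apply: proper_card; apply/properP; split.
  by apply/subsetP=> t; rewrite !inE => tz; exact: po_trans tz (ltpW zw).
by exists w; rewrite !inE ?po_refl ?(ltp_nle zw).
Qed.

Definition diamond a b c d :=
  [&& ltp le a b, ltp le b d, ltp le a c, ltp le c d, ~~ le b c & ~~ le c b].

End Basics.

Section Diamond.
Variables (T : finType) (le : rel T).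
Hypothesis Hpo : is_poset le.
Variables a b c d : T.
Hypothesis Hd : diamond le a b c d.

Lemma dfacts :
  [/\ [/\ le a b, le b d, le a c, le c d & le a d],
      [/\ le b a = false, le d b = false, le c a = false, le d c = false & le d a = false],
      [/\ le b c = false, le c b = false & (le a a /\ le b b /\ le c c /\ le d d)] &
      [/\ (a == b) = false, (a == c) = false, (a == d) = false, (b == c) = false &
          ((b == d) = false /\ (c == d) = false)]].
Proof.
move: Hd; rewrite /diamond => /and5P[ab bd ac cd /andP[/negbTE bc /negbTE cb]].
have ad := ltp_trans Hpo ab bd.
have nab := ltp_nle Hpo ab; have nbd := ltp_nle Hpo bd; have nac := ltp_nle Hpo ac.
have ncd := ltp_nle Hpo cd; have nad := ltp_nle Hpo ad.
have rf := po_refl Hpo.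
split; first by split; apply: ltpW.
- by [].
- by rewrite !rf.
split; try split; apply/negbTE/eqP=> E; subst.
- by rewrite rf in nab.
- by rewrite rf in nac.
- by rewrite rf in nad.
- by rewrite rf in bc.
- by rewrite rf in nbd.
- by rewrite rf in ncd.
Qed.

Lemma diamond_cycle : hasse_has_cycle le [set a; b; c; d].
Proof.
have [[ab bd ac cd ad] [ba db ca dc da] [bc cb [aa [bb [cc dd]]]] [eab eac ead ebc [ebd ecd]]] := dfacts.
have H : forall x y, x \in [set a; b; c; d] -> y \in [set a; b; c; d] -> ltp le x y ->
  ~~ (ltp le x a && ltp le a y) -> ~~ (ltp le x b && ltp le b y) ->
  ~~ (ltp le x c && ltp le c y) -> ~~ (ltp le x d && ltp le d y) ->
  covers_in le [set a; b; c; d] x y.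
  move=> x y xA yA xy ha hb hc hd; rewrite /covers_in xA yA xy /=.
  apply/forallP=> z; apply/implyP; rewrite !inE => /orP[/orP[/orP[]|]|] /eqP->; done.
have mem : [/\ a \in [set a; b; c; d], b \in [set a; b; c; d], c \in [set a; b; c; d] &
   d \in [set a; b; c; d]] by rewrite !inE ?eqxx ?orbT.
case: mem => ma mb mc md.
exists [:: a; b; d; c]; split => //.
- by rewrite /= !inE eab ead eac ebd ebc eq_sym ecd.
- by rewrite /= ma mb mc md.
rewrite /= /hasse_adj.
rewrite (H a b) ?(H b d) ?(H c d) ?(H a c) //= /ltp
  ?ab ?bd ?ac ?cd ?ad ?ba ?db ?ca ?dc ?da ?bc ?cb ?aa ?bb ?cc ?dd
  ?eqxx ?eab ?eac ?ead ?ebc ?ebd ?ecd ?orbT //.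
Qed.

Lemma diamond_iso : [set a; b; c; d] = setT -> order_iso le leV.
Proof.
move=> HD.
have [[ab bd ac cd ad] [ba db ca dc da] [bc cb [aa [bb [cc dd]]]] [eab eac ead ebc [ebd ecd]]] := dfacts.
pose f (i : 'I_4) := nth a [:: a; b; c; d] i.
pose h x : 'I_4 := if x == a then inord 0 else if x == b then inord 1
   else if x == c then inord 2 else inord 3.
have fK : cancel f h.
  move=> [[|[|[|[|i]]]] Hi] //; apply/val_inj;
    rewrite /h /f /= ?eqxx ?(eq_sym b) ?(eq_sym c) ?(eq_sym d) ?eab ?eac ?ead ?ebc ?ebd ?ecd /= inordK //.
have hK : cancel h f.
  move=> x; have : x \in [set a; b; c; d] by rewrite HD inE.
  rewrite !inE /h => /orP[/orP[/orP[]|]|] /eqP->;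
    rewrite ?eqxx ?(eq_sym b) ?(eq_sym c) ?(eq_sym d) ?eab ?eac ?ead ?ebc ?ebd ?ecd /f /= inordK //.
exists h; split; first exact: Bijective hK fK.
move=> x y; rewrite -(hK x) -(hK y) !fK; move: (h x) (h y).
move=> [[|[|[|[|i]]]] Hi] // [[|[|[|[|j]]]] Hj] //; rewrite /leV /f /=;
  by rewrite ?ab ?bd ?ac ?cd ?ad ?ba ?db ?ca ?dc ?da ?bc ?cb ?aa ?bb ?cc ?dd.
Qed.
End Diamond.

Lemma modS n x : x.+1 %% n = (x %% n).+1 %% n.
Proof. by rewrite -addn1 -modnDml addn1. Qed.

Lemma modeq_window n a b i : a %% n = b %% n -> i <= a < i + n -> i <= b < i + n -> a = b.
Proof.
wlog ab : a b / a <= b.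
  move=> W h ha hb; case: (leqP a b) => [l|l]; first exact: W.
  by symmetry; apply: W => //; exact: ltnW.
move=> h /andP[ia ai] /andP[ib bi].
have : n %| b - a by rewrite -eqn_mod_dvd // h.
case: (posnP (b - a)) => [z|p] d; first lia.
have := dvdn_leq p d; lia.
Qed.

Lemma last_iota i m : last i (iota i.+1 m) = i + m.
Proof.
elim: m i => [|m IH] i /=; first by rewrite addn0.
by rewrite IH addSnnS.
Qed.

Section Cyc.
Variables (T : finType) (le : rel T).
Hypothesis Hpo : is_poset le.
Variables (n : nat) (g : nat -> T).
Hypothesis n3 : 2 < n.
Hypothesis gper : forall t, g (t + n) = g t.
Hypothesis ginj : forall a b, g a = g b -> a %% n = b %% n.
Hypothesis gadj : forall t, hasse_adj le setT (g t) (g t.+1).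
Hypothesis hmin : forall A : {set T}, A \proper [set: T] -> ~ hasse_has_cycle le A.

Lemma gmod t : g t = g (t %% n).
Proof.
rewrite {1}(divn_eq t n); elim: (t %/ n) => [|q IH]; first by rewrite mul0n add0n.
have -> : q.+1 * n + t %% n = (q * n + t %% n) + n by rewrite mulSn; lia.
by rewrite gper IH.
Qed.

Lemma win_mem c i m : g c \in map g (iota i m) -> exists s, i <= s < i + m /\ c %% n = s %% n.
Proof. by case/mapP=> s; rewrite mem_iota => hs /ginj h; exists s. Qed.

Lemma win_uniq i m : m <= n -> uniq (map g (iota i m)).
Proof.
move=> mn; rewrite map_inj_in_uniq ?iota_uniq //.
move=> x y; rewrite !mem_iota => hx hy /ginj h.
apply: (modeq_window (i := i) h); lia.
Qed.

Lemma path_win (e : rel T) i m : (forall s, i <= s -> s.+1 < i + m.+1 -> e (g s) (g s.+1)) ->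
  path e (g i) (map g (iota i.+1 m)).
Proof.
elim: m i => [|m IH] i H //=.
rewrite (H i) ?leqnn //=; last lia.
apply: IH => s h1 h2; apply: H; lia.
Qed.

Lemma win_cycle (B : {set T}) i m : 3 <= m <= n ->
  (forall s, i <= s < i + m -> g s \in B) ->
  (forall s, i <= s -> s.+1 < i + m -> hasse_adj le B (g s) (g s.+1)) ->
  hasse_adj le B (g (i + m).-1) (g i) -> hasse_has_cycle le B.
Proof.
move=> hm hB hc hcl; exists (map g (iota i m)); split.
- by rewrite size_map size_iota; case/andP: hm.
- by apply: win_uniq; case/andP: hm.
- by apply/allP=> x /mapP[s]; rewrite mem_iota => hs ->; apply: hB.
case: m hm hB hc hcl => [|m] // hm hB hc hcl /=.
rewrite rcons_path path_win //= last_map last_iota.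
by move: hcl; rewrite addnS.
Qed.

Lemma chord a b : a < b < n -> hasse_adj le setT (g a) (g b) -> b = a.+1 \/ (a = 0 /\ b = n.-1).
Proof.
move=> hab hadj.
case: (boolP ((b == a.+1) || ((a == 0) && (b == n.-1)))).
  by case/orP=> [/eqP->|/andP[/eqP-> /eqP->]]; [left|right].
rewrite negb_or negb_and => /andP[h1 h2].
pose m := b - a + 1.
pose B := [set x in map g (iota a m)].
exfalso; apply: (hmin (A := B)).
  rewrite properT; apply/negP=> /eqP HB.
  pose c := if a is 0 then n.-1 else a.-1.
  have : g c \in B by rewrite HB inE.
  rewrite inE => hin; have [s0 [hs hmod]] := win_mem hin.
  have cn : c < n by rewrite /c; case: (a) hab => [|a'] /=; lia.
  have s0n : s0 < n by rewrite /m in hs; lia.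
  rewrite (modn_small cn) (modn_small s0n) in hmod.
  move: hmod hs h1 h2 hab; rewrite /c /m; case: (a) => [|a'] /=; lia.
have memB : forall s, a <= s < a + m -> g s \in B.
  by move=> s hs; rewrite inE; apply: map_f; rewrite mem_iota.
apply: (win_cycle (i := a) (m := m)).
- rewrite /m; move: h1 h2 hab; case: (a) => [|a'] /=; lia.
- exact: memB.
- move=> s hs1 hs2; apply: adj_sub (gadj s) (subsetT _) _ _; apply: memB; lia.
have -> : (a + m).-1 = b by rewrite /m; lia.
rewrite adj_sym; apply: adj_sub hadj (subsetT _) _ _; apply: memB; rewrite /m; lia.
Qed.

Lemma chord' a b : hasse_adj le setT (g a) (g b) ->
  (b %% n = a.+1 %% n) \/ (a %% n = b.+1 %% n).
Proof.
rewrite (gmod a) (gmod b) (modS n a) (modS n b).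
have ha : a %% n < n by rewrite ltn_pmod //; lia.
have hb : b %% n < n by rewrite ltn_pmod //; lia.
move: (a %% n) (b %% n) ha hb => x y hx hy H.
case: (ltngtP x y) => [xy|yx|exy].
- case: (chord (a := x) (b := y)) => //; first by rewrite xy.
    by move=> ->; left; rewrite modn_small //; lia.
  by case=> -> ->; right; rewrite prednK ?modnn //; lia.
- rewrite adj_sym in H.
  case: (chord (a := y) (b := x)) => //; first by rewrite yx.
    by move=> ->; right; rewrite modn_small //; lia.
  by case=> -> ->; left; rewrite prednK ?modnn //; lia.
- by subst; rewrite adj_irr in H.
Qed.


Hypothesis nodia : forall a b c d, ~~ diamond le a b c d.

Lemma rem1 x y z : covers_in le setT x y -> covers_in le setT y z ->
  covers_in le (setT :\ y) x z.
Proof.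
move=> cxy cyz.
have xy := cov_lt cxy; have yz := cov_lt cyz.
rewrite /covers_in !inE.
rewrite (ltp_trans Hpo xy yz) andbT.
have -> : x != y by case/andP: xy.
have -> : z != y by rewrite eq_sym; case/andP: yz.
apply/forallP=> w; rewrite !inE andbT; apply/implyP=> wy; apply/negP=> /andP[xw wz].
have := nodia x y w z; rewrite /diamond xy yz xw wz /=.
apply/negP; rewrite negbK; apply/andP; split; apply/negP=> h.
- have yw : ltp le y w by rewrite /ltp h eq_sym wy.
  exact: (cov_nobetween cyz (in_setT w) yw wz).
- have wy' : ltp le w y by rewrite /ltp h wy.
  exact: (cov_nobetween cxy (in_setT w) xw wy').
Qed.

Lemma noadj2 A x y z : covers_in le A x y -> covers_in le A y z -> hasse_adj le A x z = false.
Proof.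
move=> cxy cyz; have xy := cov_lt cxy; have yz := cov_lt cyz.
have xz := ltp_trans Hpo xy yz.
apply/negP; rewrite /hasse_adj => /orP[h|h].
- exact: (cov_nobetween h (cov_memr cxy) xy yz).
- by have := cov_lt h; rewrite (ltp_asym Hpo xz).
Qed.

Lemma notriple t :
  (covers_in le setT (g t) (g t.+1) && covers_in le setT (g t.+1) (g t.+2)) ||
  (covers_in le setT (g t.+1) (g t) && covers_in le setT (g t.+2) (g t.+1)) -> False.
Proof.
move=> H.
have Hadj : hasse_adj le (setT :\ g t.+1) (g t) (g t.+2).
  case/orP: H => /andP[c1 c2]; rewrite /hasse_adj.
  - by rewrite (rem1 c1 c2).
  - by rewrite (rem1 c2 c1) orbT.
have Hn : hasse_adj le setT (g t) (g t.+2) = false.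
  case/orP: H => /andP[c1 c2]; first exact: noadj2 c1 c2.
  by rewrite adj_sym; exact: noadj2 c2 c1.
case: (ltngtP n 3) => [|n4|n3'].
- lia.
- apply: (hmin (A := setT :\ g t.+1)).
    by rewrite properT; apply/negP=> /eqP HB; have := in_setT (g t.+1); rewrite -HB !inE eqxx.
  have memB : forall s, t.+2 <= s < t.+2 + n.-1 -> g s \in setT :\ g t.+1.
    move=> s hs; rewrite !inE andbT; apply/negP=> /eqP /ginj h.
    have := modeq_window (i := t.+1) h; lia.
  apply: (win_cycle (i := t.+2) (m := n.-1)).
  + lia.
  + exact: memB.
  + move=> s h1 h2; apply: adj_sub (gadj s) (subsetT _) _ _; apply: memB; lia.
  + have -> : (t.+2 + n.-1).-1 = t + n by lia.
    by rewrite gper.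
- have := gadj t.+2; rewrite -addn3 -n3' gper adj_sym.
  by rewrite Hn.
Qed.

Definition up t := covers_in le setT (g t) (g t.+1).

Lemma up_next t : up t.+1 = ~~ up t.
Proof.
have a0 := gadj t; have a1 := gadj t.+1.
rewrite /up; case: (boolP (covers_in le setT (g t) (g t.+1))) => h0 /=.
  apply/negP=> h1; apply: (notriple (t := t)); by rewrite h0 h1.
move: a0; rewrite /hasse_adj (negbTE h0) /= => h0'.
move: a1; rewrite /hasse_adj => /orP[//|h1].
exfalso; apply: (notriple (t := t)); by rewrite h0' h1 orbT.
Qed.

Lemma upE t : up t = odd t (+) up 0.
Proof.
elim: t => [//|t IH]; rewrite up_next IH /=.
by case: (odd t); case: (up 0).
Qed.

Lemma n_even : odd n = false.
Proof.
have : up n = up 0 by rewrite /up -(add0n n) gper -addSn gper.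
rewrite upE; by case: (odd n); case: (up 0).
Qed.

Hypothesis gsurj : forall x, exists t, x = g t.
Hypothesis up0 : ~~ up 0.

Lemma upodd t : up t = odd t.
Proof. by rewrite upE (negbTE up0) addbF. Qed.

Lemma covodd t : odd t -> covers_in le setT (g t) (g t.+1).
Proof. by rewrite -upodd. Qed.

Lemma coveven t : ~~ odd t -> covers_in le setT (g t.+1) (g t).
Proof.
rewrite -upodd /up => h; have := gadj t; by rewrite /hasse_adj (negbTE h).
Qed.

Lemma oddmod x : odd (x %% n) = odd x.
Proof. exact: odd_mod n_even. Qed.

Lemma cov_shape a c : covers_in le setT (g a) (g c) ->
  [/\ odd a, ~~ odd c & (c %% n = a.+1 %% n \/ a %% n = c.+1 %% n)].
Proof.
move=> H; have lt := cov_lt H.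
have hadj : hasse_adj le setT (g a) (g c) by rewrite /hasse_adj H.
case: (chord' hadj) => e.
- have gc : g c = g a.+1 by rewrite gmod e -gmod.
  have oa : odd a.
    apply/negPn/negP=> ea; have := cov_lt (coveven ea); rewrite -gc.
    by rewrite (ltp_asym Hpo lt).
  split => //; last by left.
  by rewrite -oddmod e oddmod /= oa.
- have ga : g a = g c.+1 by rewrite gmod e -gmod.
  have oc : ~~ odd c.
    apply/negP=> oc; have := cov_lt (covodd oc); rewrite -ga.
    by rewrite (ltp_asym Hpo lt).
  split => //; last by right.
  by rewrite -oddmod e oddmod /= oc.
Qed.

Lemma lt_odd a b : ltp le (g a) (g b) -> odd a.
Proof.
move=> h; case: (cover_exists Hpo h) => w /andP[cw _].
case: (gsurj w) => c E; rewrite E in cw.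
by case: (cov_shape cw).
Qed.

Lemma lt_shape a b : ltp le (g a) (g b) ->
  odd a /\ (b %% n = a.+1 %% n \/ a %% n = b.+1 %% n).
Proof.
move=> h; case: (cover_exists Hpo h) => w /andP[cw wb].
case: (gsurj w) => c E; rewrite E in cw wb.
case: (cov_shape cw) => oa ec rel; split => //.
case: (eqVneq (g c) (g b)) => e.
  have m := ginj e.
  case: rel => r; [left; by rewrite -m | right; by rewrite r modS m -modS].
have := lt_odd (le_ltp wb e); by rewrite (negbTE ec).
Qed.

Lemma cyc_iso : exists2 k, 2 <= k & order_iso le (leW k).
Proof.
have [k hk] : exists k, n = k.*2.
  by exists n./2; rewrite -[n in LHS]odd_double_half n_even.
have k2 : 2 <= k by rewrite -muln2 in hk; lia.
exists k => //.
pose idx (p : 'I_k * bool) : nat := if p.2 then (val p.1).*2 else (val p.1).*2.+1.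
have idxn : forall p, idx p < n.
  by move=> [i b]; have := ltn_ord i; rewrite /idx hk -!muln2; case: b => /=; lia.
pose F p := g (idx p).
have Finj : injective F.
  move=> p q /ginj; rewrite !modn_small ?idxn //.
  case: p q => [i bp] [j bq]; rewrite /idx /=.
  case: bp; case: bq => /= h; try (rewrite -!muln2 in h; lia);
  by congr pair; apply/val_inj => /=; rewrite -!muln2 in h; lia.
have Fsurj : forall x, exists p, x = F p.
  move=> x; case: (gsurj x) => t ->; rewrite gmod.
  have rn : t %% n < n by rewrite ltn_pmod //; lia.
  move: (t %% n) rn => r rn.
  have hr := odd_double_half r.
  have hq : r./2 < k by rewrite hk -muln2 in rn; rewrite -muln2 in hr; case: (odd r) hr => /=; lia.
  case: (boolP (odd r)) => o.
  - exists (Ordinal hq, false); rewrite /F /idx /=; congr g.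
    by move: hr; rewrite o /= -muln2; lia.
  - exists (Ordinal hq, true); rewrite /F /idx /=; congr g.
    by move: hr; rewrite (negbTE o) /= -muln2; lia.
have Fle : forall p q, le (F p) (F q) = leW k p q.
  move=> [i bp] [j bq]; rewrite /leW /=.
  have hi := ltn_ord i; have hj := ltn_ord j.
  case: (eqVneq (i, bp) (j, bq)) => [E|NE].
    by case: E => -> ->; rewrite ?eqxx /= (po_refl Hpo).
  have Fneq : F (i, bp) != F (j, bq) by apply/eqP=> /Finj; apply/eqP.
  rewrite /=.
  have -> : le (F (i, bp)) (F (j, bq)) = ltp le (F (i, bp)) (F (j, bq)) by rewrite /ltp Fneq andbT. clear NE Fneq.
  apply/idP/idP.
  - move=> /lt_shape [oa rel]; move: oa rel; rewrite /idx /=.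
    case: bp; first by rewrite odd_double.
    case: bq => _ rel /=.
    + have m1 : j.*2 %% n = j.*2 by rewrite modn_small // hk -!muln2; lia.
      have m3 : i.*2.+1 %% n = i.*2.+1 by rewrite modn_small // hk -!muln2; lia.
      have m4 : j.*2.+1 %% n = j.*2.+1 by rewrite modn_small // hk -!muln2; lia.
      rewrite m1 m3 m4 in rel.
      case: (ltnP i.+1 k) => hik.
        have m2 : i.*2.+2 %% n = i.*2.+2 by rewrite modn_small // hk -!muln2; lia.
        rewrite m2 in rel; rewrite (modn_small hik); rewrite -!muln2 in rel; case: rel; lia.
      have e : i.+1 = k by lia.
      have e2 : i.*2.+2 = n by rewrite hk -!muln2; lia.
      rewrite e modnn; rewrite e2 modnn in rel; rewrite -!muln2 in rel; case: rel; lia.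
    + by case: rel => /(congr1 odd); rewrite !oddmod /= !odd_double.
  - case/andP=> nbp /andP[bqt rel]; move: nbp bqt rel.
    case: bp; case: bq => //= _ _ rel; rewrite /F /idx /=.
    case/orP: rel => /eqP e.
      by rewrite e; apply: cov_lt; apply: coveven; rewrite odd_double.
    have -> : g j.*2 = g i.*2.+2.
      case: (ltnP i.+1 k) => hik.
        by rewrite e modn_small.
      have e1 : i.+1 = k by lia.
      rewrite e e1 modnn /=.
      have -> : i.*2.+2 = 0 + n by rewrite hk -!muln2; lia.
      by rewrite gper.
    by apply: cov_lt; apply: covodd; rewrite /= odd_double.
have bijF : bijective F.
  apply: (@inj_card_bij _ _ F Finj).
  have -> : #|T| = #|[set: T]| by rewrite cardsT.
  have -> : [set: T] = F @: [set: 'I_k * bool].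
    apply/setP=> x; rewrite inE; case: (Fsurj x) => p ->.
    by rewrite imset_f ?inE.
  by apply: leq_trans (leq_imset_card _ _) _; rewrite cardsT.
case: bijF => h FK HK.
exists h; split; first exact: (Bijective HK FK).
by move=> x y; rewrite -Fle !HK.
Qed.

End Cyc.

Lemma cyc_main (T : finType) (le : rel T) (Hpo : is_poset le) (n : nat) (g : nat -> T) :
  2 < n ->
  (forall t, g (t + n) = g t) ->
  (forall a b, g a = g b -> a %% n = b %% n) ->
  (forall t, hasse_adj le setT (g t) (g t.+1)) ->
  (forall A : {set T}, A \proper [set: T] -> ~ hasse_has_cycle le A) ->
  (forall a b c d, ~~ diamond le a b c d) ->
  (forall x, exists t, x = g t) ->
  exists2 k, 2 <= k & order_iso le (leW k).
Proof.
move=> n3 gper ginj gadj hmin nodia gsurj.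
case: (boolP (up le g 0)) => u0; last exact: (cyc_iso Hpo n3 gper ginj gadj hmin nodia gsurj u0).
pose g' t := g t.+1.
apply: (cyc_iso Hpo (n := n) (g := g') n3 _ _ _ hmin nodia _ _).
- by move=> t; rewrite /g' -addSn gper.
- move=> a b /ginj h; apply/eqP; rewrite -(eqn_modDl 1) !add1n; exact/eqP.
- by move=> t; exact: gadj.
- move=> x; case: (gsurj x) => [[|t]] ->; last by exists t.
  exists n.-1; rewrite /g'.
  have -> : (n.-1).+1 = 0 + n by lia.
  by rewrite gper.
- change (~~ up le g 1).
  by rewrite (up_next Hpo n3 gper ginj gadj hmin nodia 0) u0.
Qed.

Unset Implicit Arguments.
Theorem lemma8 (T : finType) (le : rel T) :
  is_poset le ->
  hasse_has_cycle le [set: T] ->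
  (forall A : {set T}, A \proper [set: T] -> ~ hasse_has_cycle le A) ->
  order_iso le leV \/ (exists2 k : nat, 2 <= k & order_iso le (leW k)).
Proof.
move=> Hpo [s [hs3 us alls cs]] hmin.
case: (boolP [exists a, exists b, exists c, exists d, diamond le a b c d]).
  case/existsP=> a /existsP [b /existsP [c /existsP [d Hd]]].
  left; apply: (diamond_iso Hpo Hd).
  apply/eqP; apply/negPn/negP=> hne.
  by apply: (hmin _ _ (diamond_cycle Hpo Hd)); rewrite properT.
move=> nd.
have nodia : forall a b c d, ~~ diamond le a b c d.
  move=> a b c d; apply/negP=> H; apply: (negP nd).
  by apply/existsP; exists a; apply/existsP; exists b; apply/existsP; exists c;
     apply/existsP; exists d.
have ham : forall x, x \in s.
  have cB : hasse_has_cycle le [set x in s].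
    exists s; split => //; first by apply/allP=> x; rewrite inE.
    apply: (@sub_in_cycle _ (mem s) (hasse_adj le setT)) cs; last by apply/allP.
    by move=> x y xs ys h; apply: adj_sub h (subsetT _) _ _; rewrite inE.
  have HB : [set x in s] = setT.
    apply/eqP; apply/negPn/negP=> hne.
    by apply: (hmin _ _ cB); rewrite properT.
  move=> x; have : x \in [set x in s] by rewrite HB inE.
  by rewrite inE.
right.
case: s hs3 us alls cs ham => [//|x0 p] hs3 us alls cs ham.
set s := x0 :: p in us cs ham.
pose n := size s.
have n0 : 0 < n by [].
pose g t := nth x0 s (t %% n).
have key : forall r, r < n -> hasse_adj le setT (nth x0 s r) (nth x0 s (r.+1 %% n)).
  move: cs; rewrite /cycle => /(pathP x0) H r hr.
  have := H r; rewrite size_rcons => /(_ hr).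
  rewrite -rcons_cons nth_rcons -/s hr !nth_rcons.
  case: (ltnP r (size p)) => hrp.
    by rewrite modn_small //= /n /s /=; lia.
  have e : r = size p by move: hr; rewrite /n /s /=; lia.
  by rewrite e eqxx /n /s /= modnn.
apply: (cyc_main Hpo (n := n) (g := g)).
- by [].
- by move=> t; rewrite /g modnDr.
- move=> a b; rewrite /g => /eqP; rewrite nth_uniq ?ltn_pmod //; exact/eqP.
- by move=> t; rewrite /g (modS n t); apply: key; rewrite ltn_pmod.
- exact: hmin.
- exact: nodia.
- move=> x; exists (index x s); rewrite /g modn_small ?index_mem ?ham //.
  by rewrite nth_index.
Qed.
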